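(* Let $S^*\subset(0,\infty)$ be an open set that is additive (i.e. $a,b\in S^*\Rightarrow a+b\in S^*$), let $S=[0,\infty)\setminus S^*$, and let $L=\sup S$ (finite, since $S$ is bounded). For $x\in[0,L]$ let $a(x)=\sup\{y\in\partial S: y\le x\}$, $b(x)=\inf\{y\in\partial S: y\ge x\}$, $\alpha(x)=x-a(x)$, $\beta(x)=b(x)-x$, and define $h_S:[0,L]\to\mathbb{R}$ by $$h_S(x)=\begin{cases}0 & x\in\partial S,\\ \min(\alpha(x),\beta(x)) & x\in\operatorname{Int}S,\\ -\min(\alpha(x),\beta(x)) & x\in S^*.\end{cases}$$ (Equivalently, $h_S(x)=d(x,\partial S)$ on $\operatorname{Int}S$, $-d(x,\partial S)$ on $S^*$, and $0$ on $\partial S$.) Then: (a) for each $s\in S$, the graph of $h_S$ has a horizontal chord of length $s$, i.e. there exists $x\in[0,L-s]$ with $h_S(x)=h_S(x+s)$; (b) if $x,x+s\in[0,L]$ with $s\ge 0$ and $h_S(x)=h_S(x+s)$, then $s\in S$.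
   Context: $\partial S$ and $\operatorname{Int}S$ denote the boundary and interior of $S$ in $\mathbb{R}$; $d(x,\partial S)$ is the distance from $x$ to $\partial S$. $h_S$ is continuous. *)

(* Defs.v *)
From HB Require Import structures.
From mathcomp Require Import all_boot all_order all_algebra.
From mathcomp Require Import all_classical all_reals all_analysis.
Set Implicit Arguments. Unset Strict Implicit. Unset Printing Implicit Defensive.
Import Order.TTheory GRing.Theory Num.Theory.
Import numFieldNormedType.Exports.
Local Open Scope classical_set_scope.
Local Open Scope ring_scope.

Section Defs.
Variable R : realType.

Definition Sset (Sstar : set R) : set R := [set x | 0 <= x /\ ~ Sstar x].

Definition bdry (A : set R) : set R := closure A `\` interior A.

Definition a_S (Sstar : set R) (x : R) : R :=
  sup [set y | bdry (Sset Sstar) y /\ y <= x].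
Definition b_S (Sstar : set R) (x : R) : R :=
  inf [set y | bdry (Sset Sstar) y /\ x <= y].

Definition h_S (Sstar : set R) (x : R) : R :=
  if pselect (bdry (Sset Sstar) x) then 0
  else if pselect (interior (Sset Sstar) x) then
    Num.min (x - a_S Sstar x) (b_S Sstar x - x)
  else - Num.min (x - a_S Sstar x) (b_S Sstar x - x).
End Defs.

(* Main.v *)
Require Import Defs.
From HB Require Import structures.
From mathcomp Require Import all_boot all_order all_algebra.
From mathcomp Require Import all_classical all_reals all_analysis.
From mathcomp Require Import lra ring.
Import Order.TTheory GRing.Theory Num.Theory.
Import numFieldNormedType.Exports.
Local Open Scope classical_set_scope.
Local Open Scope ring_scope.

Section P.
Variable R : realType.
Variable Sstar : set R.
Hypothesis Sopen : open Sstar.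
Hypothesis Spos : Sstar `<=` [set x | 0 < x].
Hypothesis Sadd : forall a b, Sstar a -> Sstar b -> Sstar (a + b).
Hypothesis Sne : Sstar !=set0.

Local Notation S := (Sset Sstar).

Definition intS (x : R) := exists2 e : R, 0 < e & forall y, `|y - x| < e -> S y.
Definition Bd (x : R) := S x /\ ~ intS x.

Lemma Sball {x : R} : Sstar x -> exists2 d : R, 0 < d & forall y, `|y - x| < d -> Sstar y.
Proof.
move=> Hx; have := Sopen; rewrite openE => /(_ x Hx).
rewrite /interior => /nbhs_ballP [e e0 He]; exists e => // y Hy; apply: He.
by rewrite /ball /= distrC.
Qed.

Lemma interiorE x : interior S x <-> intS x.
Proof.
rewrite /interior; split.
  move=> /nbhs_ballP [e e0 He]; exists e => // y Hy; apply: He.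
  by rewrite /ball /= distrC.
move=> [e e0 He]; apply/nbhs_ballP; exists e => // y Hy; apply: He.
by move: Hy; rewrite /ball /= distrC.
Qed.

Lemma closureS x : closure S x -> S x.
Proof.
move=> Hc; split.
  rewrite leNgt; apply/negP => xn.
  have : nbhs x [set y : R | `|y - x| < - x].
    apply/nbhs_ballP; exists (- x); first by rewrite /= ltrNr oppr0.
    by move=> y; rewrite /ball /= distrC.
  move=> /Hc [y [[y0 _] /=]].
  rewrite ltr_norml => /andP [_]; rewrite ltrBlDr addNr; lra.
move=> Hx; have [d d0 Hd] := Sball Hx.
have : nbhs x [set y : R | `|y - x| < d].
  apply/nbhs_ballP; exists d => // y; rewrite /ball /= distrC //.
by move=> /Hc [y [[_ ny] /= /Hd]].
Qed.

Lemma bdryE x : bdry S x <-> Bd x.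
Proof.
rewrite /bdry /Bd /=; split.
  by move=> [/closureS Sx /interiorE]; split.
move=> [Sx nx]; split; last by move=> /interiorE.
by apply: subset_closure.
Qed.


Lemma Sp {x : R} : Sstar x -> 0 < x.
Proof. by move=> /Spos. Qed.

Lemma archi (x : R) : exists K : nat, x < K%:R.
Proof.
case: (lerP 0 x) => x0; last by exists 0%N; rewrite mulr0n.
by exists (Num.bound x); apply: archi_boundP.
Qed.

Lemma Sbounded : exists M : R, forall x, S x -> x <= M.
Proof.
have [c Sc] := Sne; have c0 : 0 < c := Sp Sc.
have [d d0 Hd] := Sball Sc.
have mult : forall n : nat, forall w, `|w - c| < d -> Sstar (w *+ n.+1).
  elim=> [|n IH] w Hw; first by rewrite mulr1n; apply: Hd.
  by rewrite mulrS; apply: Sadd; [apply: Hd | apply: IH].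
have [K HK] := archi (c / d).
have K0 : 0 < K%:R :> R.
  apply: le_lt_trans HK; exact: divr_ge0 (ltW c0) (ltW d0).
have cK : c < K%:R * d by rewrite -ltr_pdivrMr.
have step : forall n : nat, forall z, K%:R * c <= z -> z < (K + n)%:R * c -> Sstar z.
  elim=> [|n IH] z z1 z2; first by rewrite addn0 in z2; lra.
  case: (ltrP z ((K + n)%:R * c)) => hz; first by apply: IH.
  set m := (K + n)%N.
  have m0 : (0 < m)%N.
    by rewrite /m; move: K0; rewrite ltr0n => H; rewrite addn_gt0 H.
  have mR : 0 < m%:R :> R by rewrite ltr0n.
  have Km : K%:R <= m%:R :> R by rewrite ler_nat /m leq_addr.
  have -> : z = (z / m%:R) *+ m.-1.+1.
    by rewrite prednK // -mulr_natr divfK // gt_eqF.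
  apply: mult.
  set w := z / m%:R.
  have hzw : z = w * m%:R by rewrite /w divfK // gt_eqF.
  move: z2; rewrite addnS -addn1 natrD -/m => z2.
  have : d * K%:R <= d * m%:R by rewrite ler_pM2l.
  have cw : c <= w by rewrite /w ler_pdivlMr // mulrC.
  rewrite ger0_norm; last by lra.
  nra.
exists (K%:R * c) => x [x0 nx]; rewrite leNgt; apply/negP => hx.
apply: nx; have [n Hn] := archi (x / c).
apply: (step n) => //; first exact: ltW.
rewrite natrD mulrDl.
have : x < n%:R * c by rewrite -ltr_pdivrMr.
nra.
Qed.


Section SupInf.
Implicit Types (T P : set R).

Lemma supU {T t M} : T t -> (forall y, T y -> y <= M) -> t <= sup T.
Proof.
move=> Tt HM; apply: (sup_upper_bound (E := T)) => //.
by split; [exists t | exists M].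
Qed.

Lemma supL {T t M} : T t -> (forall y, T y -> y <= M) -> sup T <= M.
Proof. by move=> Tt HM; apply: ge_sup; [exists t|]. Qed.

Lemma infL {T t M} : T t -> (forall y, T y -> M <= y) -> inf T <= t.
Proof.
move=> Tt HM; apply: (ge_inf (E := T)) => //; by exists M.
Qed.

Lemma infU {T t M} : T t -> (forall y, T y -> M <= y) -> M <= inf T.
Proof. by move=> Tt HM; apply: lb_le_inf; [exists t|]. Qed.

Definition copen P := forall x, ~ P x -> exists2 e : R, 0 < e & forall y, `|y - x| < e -> ~ P y.

Lemma sup_in {P T t M} : copen P -> T t -> (forall y, T y -> y <= M) -> T `<=` P -> P (sup T).
Proof.
move=> cP Tt HM TP; apply: contrapT => nP.
have [e e0 He] := cP _ nP.
have [y Ty hy] := @sup_adherent _ T e e0 (conj (ex_intro _ t Tt) (ex_intro _ M HM)).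
have := supU Ty HM => yle.
apply: (He y) (TP _ Ty); rewrite ltr_norml; apply/andP; split; lra.
Qed.

Lemma inf_in {P T t M} : copen P -> T t -> (forall y, T y -> M <= y) -> T `<=` P -> P (inf T).
Proof.
move=> cP Tt HM TP; apply: contrapT => nP.
have [e e0 He] := cP _ nP.
have [y Ty hy] := @inf_adherent _ T e e0 (conj (ex_intro _ t Tt) (ex_intro _ M HM)).
have := infL Ty HM => yle.
apply: (He y) (TP _ Ty); rewrite ltr_norml; apply/andP; split; lra.
Qed.
End SupInf.

Lemma copenS : copen S.
Proof.
move=> x nx; case: (lerP 0 x) => x0.
  have sx : Sstar x by apply: contrapT => h; apply: nx.
  have [d d0 Hd] := Sball sx; exists d => // y /Hd sy [_]; done.
exists (- x); first lra.
move=> y; rewrite ltr_norml => /andP [h1 h2] [y0 _]; lra.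
Qed.

Lemma copenB : copen Bd.
Proof.
move=> x nx; case: (pselect (S x)) => Sx.
  have ix : intS x by apply: contrapT => h; apply: nx.
  case: ix => e e0 He; exists (e / 2); first lra.
  move=> y hy [_ []]; exists (e / 2); first lra.
  move=> z hz; apply: He.
  have := ler_normD (z - y) (y - x); rewrite !addrA subrK; lra.
have [e e0 He] := copenS x Sx; exists e => // y /He h [].
done.
Qed.


Local Notation L := (sup S).

Lemma BdS {x} : Bd x -> S x. Proof. by case. Qed.

Lemma S0 : S 0.
Proof. by split => // /Sp; rewrite ltxx. Qed.

Lemma B0 : Bd 0.
Proof.
split; first exact: S0.
move=> [e e0 He]; have [] := He (- (e / 2)).
  rewrite subr0 normrN ger0_norm; lra.
lra.
Qed.

Lemma SleL {x} : S x -> x <= L.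
Proof. by have [M HM] := Sbounded => Sx; apply: (supU Sx HM). Qed.

Lemma SL : S L.
Proof. by have [M HM] := Sbounded; apply: (sup_in copenS S0 HM). Qed.

Lemma L0 : 0 <= L.
Proof. exact: SleL S0. Qed.

Lemma BL : Bd L.
Proof.
split; first exact: SL.
move=> [e e0 He].
have h : `|L + e / 2 - L| < e.
  rewrite addrAC subrr add0r ger0_norm; lra.
have := SleL (He _ h); lra.
Qed.

Lemma bdryEq : bdry S = Bd.
Proof. by apply/funext => y; apply/propext; exact: bdryE. Qed.

Definition D x := Num.min (x - a_S Sstar x) (b_S Sstar x - x).

Section AB.
Variable x : R.
Hypothesis x0 : 0 <= x.
Hypothesis xL : x <= L.

Lemma aE : a_S Sstar x = sup [set y | Bd y /\ y <= x].
Proof. by rewrite /a_S bdryEq. Qed.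
Lemma bE : b_S Sstar x = inf [set y | Bd y /\ x <= y].
Proof. by rewrite /b_S bdryEq. Qed.

Let Aub : forall y, [set y | Bd y /\ y <= x] y -> y <= x.
Proof. by move=> y []. Qed.
Let Blb : forall y, [set y | Bd y /\ x <= y] y -> x <= y.
Proof. by move=> y []. Qed.
Let A0 : [set y | Bd y /\ y <= x] 0.
Proof. by split; [exact: B0|]. Qed.
Let BLs : [set y | Bd y /\ x <= y] L.
Proof. by split; [exact: BL|]. Qed.

Lemma aB : Bd (a_S Sstar x).
Proof. by rewrite aE; apply: (sup_in copenB A0 Aub) => y []. Qed.
Lemma ale : a_S Sstar x <= x.
Proof. by rewrite aE; apply: (supL A0 Aub). Qed.
Lemma amax {z} : Bd z -> z <= x -> z <= a_S Sstar x.
Proof. by move=> Bz zx; rewrite aE; apply: (supU (conj Bz zx) Aub). Qed.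
Lemma bB : Bd (b_S Sstar x).
Proof. by rewrite bE; apply: (inf_in copenB BLs Blb) => y []. Qed.
Lemma bge : x <= b_S Sstar x.
Proof. by rewrite bE; apply: (infU BLs Blb). Qed.
Lemma bmin {z} : Bd z -> x <= z -> b_S Sstar x <= z.
Proof. by move=> Bz zx; rewrite bE; apply: (infL (conj Bz zx) Blb). Qed.

Lemma DleB {z} : Bd z -> D x <= `|x - z|.
Proof.
move=> Bz; rewrite /D; case: (lerP z x) => zx.
  rewrite ge_min; apply/orP; left; have := amax Bz zx; lra.
rewrite ge_min; apply/orP; right; have := bmin Bz (ltW zx); lra.
Qed.

Lemma D0 : 0 <= D x.
Proof.
by rewrite /D le_min !subr_ge0 ale bge.
Qed.

Lemma Dex : exists z, Bd z /\ D x = `|x - z|.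
Proof.
rewrite /D; case: (lerP (x - a_S Sstar x) (b_S Sstar x - x)) => h.
  exists (a_S Sstar x); split; first exact: aB.
  by rewrite ger0_norm // subr_ge0 ale.
exists (b_S Sstar x); split; first exact: bB.
by rewrite distrC ger0_norm // subr_ge0 bge.
Qed.

Lemma DB : Bd x -> D x = 0.
Proof.
move=> Bx; apply/eqP; rewrite eq_le D0 andbT.
by have := DleB Bx; rewrite subrr normr0.
Qed.

Lemma hS : S x -> h_S Sstar x = D x.
Proof.
move=> Sx; rewrite /h_S; case: pselect => [Bx|nB].
  by rewrite DB //; apply/bdryE.
case: pselect => // ni; exfalso; apply: nB; apply/bdryE; split => //.
by move=> /interiorE.
Qed.

Lemma hN : Sstar x -> h_S Sstar x = - D x.
Proof.
move=> sx; rewrite /h_S; case: pselect => [Bx|nB].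
  by exfalso; move/bdryE: (Bx) => [[_ []]].
case: pselect => // ix; exfalso; move/interiorE: (ix) => [e e0 He].
by case: (He x); rewrite ?subrr ?normr0.
Qed.

End AB.


Arguments DleB {x z}.
Arguments Dex {x}.
Arguments D0 {x}.
Arguments DB {x}.
Arguments hS {x}.
Arguments hN {x}.
Arguments aB {x}.
Arguments bB {x}.
Arguments ale {x}.
Arguments bge {x}.
Arguments amax {x z}.
Arguments bmin {x z}.

Lemma nSS {y} : 0 <= y -> ~ S y -> Sstar y.
Proof. by move=> y0 ny; apply: contrapT => h; apply: ny. Qed.

Lemma SorN {y} : 0 <= y -> S y \/ Sstar y.
Proof.
move=> y0; case: (pselect (S y)) => h; [by left | by right; apply: nSS].
Qed.

Lemma SN {y} : S y -> Sstar y -> False.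
Proof. by move=> [_ h]. Qed.

Lemma nge {a b : R} : a <= b -> `|a - b| = b - a.
Proof. by move=> h; rewrite distrC ger0_norm // subr_ge0. Qed.
Lemma nle {a b : R} : b <= a -> `|a - b| = a - b.
Proof. by move=> h; rewrite ger0_norm // subr_ge0. Qed.

Lemma between {x y} : S x -> Sstar y ->
  exists z, Bd z /\ ((x <= z <= y) \/ (y <= z <= x)).
Proof.
move=> Sx sy; have y0 := ltW (Sp sy).
case: (lerP x y) => hxy.
  pose T := [set t | S t /\ t <= y].
  have Tx : T x by [].
  have Tub : forall t, T t -> t <= y by move=> t [].
  have Sz : S (sup T) by apply: (sup_in copenS Tx Tub) => t [].
  have xz := supU Tx Tub; have zy := supL Tx Tub.
  have zy' : sup T < y.
    rewrite lt_neqAle zy andbT; apply/negP => /eqP e.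
    by apply: (SN Sz); rewrite e.
  exists (sup T); split; last by left; rewrite xz zy.
  split => // -[e e0 He].
  pose m := Num.min e (y - sup T).
  have m1 : m <= e by rewrite /m ge_min lexx.
  have m2 : m <= y - sup T by rewrite /m ge_min lexx orbT.
  have m0 : 0 < m by rewrite /m lt_min e0 subr_gt0 zy'.
  have Tt : T (sup T + m / 2).
    split; last lra.
    apply: He; rewrite addrAC subrr add0r ger0_norm; lra.
  have := supU Tt Tub; lra.
pose T := [set t | S t /\ y <= t].
have Tx : T x by split => //; apply: ltW.
have Tlb : forall t, T t -> y <= t by move=> t [].
have Sz : S (inf T) by apply: (inf_in copenS Tx Tlb) => t [].
have zx := infL Tx Tlb; have yz := infU Tx Tlb.
have yz' : y < inf T.
  rewrite lt_neqAle yz andbT; apply/negP => /eqP e.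
  by apply: (SN Sz); rewrite -e.
exists (inf T); split; last by right; rewrite zx yz.
split => // -[e e0 He].
pose m := Num.min e (inf T - y).
have m1 : m <= e by rewrite /m ge_min lexx.
have m2 : m <= inf T - y by rewrite /m ge_min lexx orbT.
have m0 : 0 < m by rewrite /m lt_min e0 subr_gt0 yz'.
have Tt : T (inf T - m / 2).
  split; last lra.
  apply: He; rewrite addrAC subrr add0r normrN ger0_norm; lra.
have := infL Tt Tlb; lra.
Qed.

Lemma ballL {x w} : 0 <= x -> x <= L -> `|x - w| < D x ->
  (S x -> S w) /\ (Sstar x -> Sstar w).
Proof.
move=> x0 xL hw.
have w0 : 0 <= w.
  rewrite leNgt; apply/negP => wn.
  have := DleB (x:=x) B0; rewrite subr0 ger0_norm // => h1.
  move: hw; rewrite nle; lra.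
split.
  move=> Sx; apply: contrapT => nw.
  have [z [Bz hz]] := between Sx (nSS w0 nw).
  have := DleB (x:=x) Bz.
  case: hz => /andP [h1 h2].
    move: hw; rewrite (nge (le_trans h1 h2)) (nge h1); lra.
  move: hw; rewrite (nle (le_trans h1 h2)) (nle h2); lra.
move=> sx; apply: contrapT => nw.
have Sw : S w by apply: contrapT => h; apply: nw; apply: nSS.
have [z [Bz hz]] := between Sw sx.
have := DleB (x:=x) Bz.
case: hz => /andP [h1 h2].
  move: hw; rewrite (nle (le_trans h1 h2)) (nle h2); lra.
move: hw; rewrite (nge (le_trans h1 h2)) (nge h1); lra.
Qed.


Lemma Qp {z u} : Bd z -> Sstar u ->
  exists2 d : R, 0 < d & forall t, `|t - u| < d -> Sstar (z + t).
Proof.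
move=> Bz su; have [d d0 Hd] := Sball su; exists d => // t ht.
have z0 : 0 <= z by case: (BdS Bz).
case: (eqVneq z 0) => [->|zn0]; first by rewrite add0r; apply: Hd.
have zp : 0 < z by rewrite lt_neqAle eq_sym zn0 z0.
pose ep := Num.min (d - `|t - u|) z.
have ep1 : ep <= d - `|t - u| by rewrite /ep ge_min lexx.
have ep2 : ep <= z by rewrite /ep ge_min lexx orbT.
have ep0 : 0 < ep by rewrite /ep lt_min subr_gt0 ht zp.
have [y [hy ny]] : exists y, `|y - z| < ep /\ ~ S y.
  apply: contrapT => H; case: Bz => _; apply; exists ep => // y hy.
  apply: contrapT => ny; apply: H; by exists y.
have y0 : 0 <= y by move: hy; rewrite ltr_norml => /andP [h1 h2]; lra.
have sy := nSS y0 ny.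
have -> : z + t = y + (z + t - y) by ring.
apply: (Sadd _ _ sy (Hd _ _)).
have e : z + t - y - u = (z - y) + (t - u) by ring.
rewrite e; have := ler_normD (z - y) (t - u); rewrite distrC; lra.
Qed.

Lemma Dpos {x} : 0 <= x -> x <= L -> ~ Bd x -> 0 < D x.
Proof.
move=> x0 xL nB; have [z [Bz hz]] := Dex x0 xL.
rewrite lt_neqAle (D0 x0 xL) andbT; apply/negP => /eqP e.
move: hz; rewrite -e => /esym /normr0_eq0 /subr0_eq xz.
by apply: nB; rewrite xz.
Qed.

Lemma theta {a d : R} : 0 < a -> 0 < d ->
  0 < d / (2 * (a + d)) /\ d / (2 * (a + d)) < 1 /\ d / (2 * (a + d)) * a < d.
Proof.
move=> a0 d0; set th := d / (2 * (a + d)).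
have nz : 2 * (a + d) != 0 by apply/lt0r_neq0; lra.
have thE : th * (2 * (a + d)) = d by rewrite /th divfK.
have th0 : 0 < th by rewrite /th divr_gt0 //; lra.
split => //; split; nra.
Qed.

Lemma partb x s : 0 <= s -> 0 <= x -> x + s <= L ->
  h_S Sstar x = h_S Sstar (x + s) -> S s.
Proof.
move=> s0 x0 xsL he; apply: contrapT => ns; have ss := nSS s0 ns.
have xL : x <= L by lra.
have xs0 : 0 <= x + s by lra.
case: (SorN x0) => [Sx|sx]; last first.
  have sxs := Sadd _ _ sx ss.
  move: he; rewrite (hN sx) (hN sxs) => /oppr_inj he.
  have [d d0 Hd] := Sball ss.
  have [z [Bz hz]] := Dex xs0 xsL.
  have Dp : 0 < D x by apply: Dpos => // /BdS Sx; apply: SN Sx sx.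
  have [th0 [th1 th2]] := theta Dp d0.
  set th := d / (2 * (D x + d)) in th0 th1 th2.
  set e := z - (x + s).
  have ee : `|e| = D x by rewrite he hz distrC.
  have ss' : Sstar (s + th * e).
    apply: Hd; rewrite addrAC subrr add0r normrM ee gtr0_norm //.
  have hw : `|x - (z - (s + th * e))| < D x.
    have -> : x - (z - (s + th * e)) = (th - 1) * e by rewrite /e; ring.
    rewrite normrM ee ler0_norm; last lra.
    nra.
  have [_ sw] := ballL x0 xL hw.
  have := Sadd _ _ (sw sx) ss'; rewrite subrK => sz.
  exact: SN (BdS Bz) sz.
case: (SorN xs0) => [Sxs|sxs]; last first.
  move: he; rewrite (hS x0 xL Sx) (hN sxs).
  have := D0 x0 xL.
  have : 0 < D (x + s) by apply: Dpos => // /BdS Sxs; apply: SN Sxs sxs.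
  lra.
move: he; rewrite (hS x0 xL Sx) (hS xs0 xsL Sxs) => he.
have [z [Bz hz]] := Dex x0 xL.
have [d d0 Hd] := Qp Bz ss.
case: (eqVneq (D x) 0) => [De|Dn0].
  move: hz; rewrite De => /esym /normr0_eq0 /subr0_eq xz.
  have := Hd s; rewrite subrr normr0 -xz => /(_ d0) sxs.
  exact: SN Sxs sxs.
have Dp : 0 < D x by rewrite lt_neqAle eq_sym Dn0 (D0 x0 xL).
have [th0 [th1 th2]] := theta Dp d0.
set th := d / (2 * (D x + d)) in th0 th1 th2.
have st : Sstar (z + (s + th * (x - z))).
  apply: Hd; rewrite addrAC subrr add0r normrM -hz gtr0_norm //.
have hw : `|x + s - (z + (s + th * (x - z)))| < D (x + s).
  have -> : x + s - (z + (s + th * (x - z))) = (1 - th) * (x - z) by ring.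
  rewrite normrM -hz -he ger0_norm; last lra.
  nra.
have [Sw _] := ballL xs0 xsL hw.
exact: SN (Sw Sxs) st.
Qed.


Lemma lip_cont (f : R -> R) : (forall x y, `|f x - f y| <= 2 * `|x - y|) -> continuous f.
Proof.
move=> H x; apply/cvgrPdist_lt => e e0.
apply/nbhs_ballP; exists (e / 4); first by rewrite /=; lra.
move=> y; rewrite /ball /= => hy.
have := H x y; lra.
Qed.


Lemma Dlip {x y} : 0 <= x -> x <= L -> 0 <= y -> y <= L -> D x <= D y + `|x - y|.
Proof.
move=> x0 xL y0 yL; have [z [Bz hz]] := Dex y0 yL.
have := DleB (x:=x) Bz; have := ler_normD (x - y) (y - z).
have -> : x - y + (y - z) = x - z by ring.
lra.
Qed.

Lemma hmixed {x y} : 0 <= x -> x <= L -> 0 <= y -> y <= L -> S x -> Sstar y ->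
  `|h_S Sstar x - h_S Sstar y| <= `|x - y|.
Proof.
move=> x0 xL y0 yL Sx sy; rewrite (hS x0 xL Sx) (hN sy) opprK.
have := D0 x0 xL; have := D0 y0 yL => d1 d2.
rewrite ger0_norm; last lra.
have [z [Bz hz]] := between Sx sy.
have := DleB (x:=x) Bz; have := DleB (x:=y) Bz.
case: hz => /andP [h1 h2].
  rewrite (nge h1) (nle h2) (nge (le_trans h1 h2)); lra.
rewrite (nle h2) (nge h1) (nle (le_trans h1 h2)); lra.
Qed.

Lemma hlip {x y} : 0 <= x -> x <= L -> 0 <= y -> y <= L ->
  `|h_S Sstar x - h_S Sstar y| <= `|x - y|.
Proof.
move=> x0 xL y0 yL.
have d1 := Dlip x0 xL y0 yL; have d2 := Dlip y0 yL x0 xL.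
rewrite (distrC y x) in d2.
case: (SorN x0) => Sx; case: (SorN y0) => Sy.
- rewrite (hS x0 xL Sx) (hS y0 yL Sy) ler_norml; apply/andP; split; lra.
- exact: hmixed.
- by rewrite distrC (distrC x); apply: hmixed.
- rewrite (hN Sx) (hN Sy) ler_norml; apply/andP; split; lra.
Qed.


Lemma parta s : S s -> exists x, 0 <= x /\ x <= L - s /\ h_S Sstar x = h_S Sstar (x + s).
Proof.
move=> Ss; have sL := SleL Ss; have s0 : 0 <= s by case: Ss.
have l0 : (0 : R) <= 0 by [].
case: (pselect (Bd s)) => Bs.
  exists 0; split => //; split; first lra.
  rewrite add0r (hS l0 L0 S0) (hS s0 sL Ss) (DB l0 L0 B0) (DB s0 sL Bs) //.
set a := a_S Sstar s; set b := b_S Sstar s.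
have Ba : Bd a := aB s0.
have Bb : Bd b := bB sL.
have as_ : a <= s := ale s0.
have sb : s <= b := bge sL.
have a0 : 0 <= a by case: (BdS Ba).
have bL : b <= L := SleL (BdS Bb).
have as' : a < s.
  rewrite lt_neqAle as_ andbT; apply/negP => /eqP e; apply: Bs; by rewrite -e.
have sb' : s < b.
  rewrite lt_neqAle sb andbT; apply/negP => /eqP e; apply: Bs; by rewrite e.
have mid : forall p, a < p -> p < b -> S p.
  move=> p ap pb; apply: contrapT => np.
  have sp := nSS (ltW (le_lt_trans a0 ap)) np.
  have [z [Bz hz]] := between Ss sp.
  case: hz => /andP [h1 h2].
    have := bmin (x:=s) Bz h1; rewrite -/b; lra.
  have := amax (x:=s) Bz h2; rewrite -/a; lra.
set u := b - s.
have u0 : 0 < u by rewrite /u subr_gt0.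
have Su : S u.
  apply: contrapT => nu; have su := nSS (ltW u0) nu.
  have [d d0 Hd] := Qp Ba su.
  have := Hd u; rewrite subrr normr0 => /(_ d0) sau.
  have Sau : S (a + u) by apply: mid; rewrite /u; lra.
  exact: SN Sau sau.
have ub : u + s = b by rewrite /u subrK.
pose g y := h_S Sstar (y + s) - h_S Sstar y.
pose c y := if y < 0 then 0 else if y < u then y else u.
have cP : forall y, 0 <= c y /\ c y <= u.
  move=> y; rewrite /c; case: ltrP => h1; first by split; lra.
  case: ltrP => h2; split; lra.
have cl : forall y1 y2, `|c y1 - c y2| <= `|y1 - y2|.
  move=> y1 y2; have := ler_norm (y1 - y2); have := ler_norm (y2 - y1).
  rewrite (distrC y2 y1) /c => n1 n2.
  rewrite ler_norml.
  case: (ltrP y1 0) => h1; case: (ltrP y1 u) => h2; case: (ltrP y2 0) => h3;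
    case: (ltrP y2 u) => h4; apply/andP; split; lra.
have cid : forall y, 0 <= y -> y <= u -> c y = y.
  move=> y y0 yu; rewrite /c; case: ltrP => h1; first lra.
  case: ltrP => h2 //; lra.
pose G y := g (c y).
have Gc : continuous G.
  apply: lip_cont => y1 y2; rewrite /G /g.
  have [c10 c1u] := cP y1; have [c20 c2u] := cP y2.
  have e1 := hlip (x := c y1 + s) (y := c y2 + s) ltac:(lra) ltac:(lra) ltac:(lra) ltac:(lra).
  have e2 := hlip (x := c y1) (y := c y2) c10 ltac:(lra) c20 ltac:(lra).
  rewrite (_ : c y1 + s - (c y2 + s) = c y1 - c y2) in e1; last by ring.
  set A1 := h_S Sstar (c y1 + s) in e1 *; set A2 := h_S Sstar (c y2 + s) in e1 *.
  set B1 := h_S Sstar (c y1) in e2 *; set B2 := h_S Sstar (c y2) in e2 *.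
  have -> : A1 - B1 - (A2 - B2) = (A1 - A2) - (B1 - B2) by ring.
  have := ler_normB (A1 - A2) (B1 - B2); have := cl y1 y2; lra.
have G0 : 0 <= G 0.
  rewrite /G cid ?lexx ?(ltW u0) // /g add0r (hS s0 sL Ss) (hS l0 L0 S0).
  rewrite (DB l0 L0 B0) subr0; exact: D0 s0 sL.
have uL : u <= L by lra.
have b0 : 0 <= b by lra.
have u0' : 0 <= u by lra.
have Gu : G u <= 0.
  rewrite /G (cid u u0' (lexx u)) /g ub.
  rewrite (hS u0' uL Su) (hS b0 bL (BdS Bb)) (DB b0 bL Bb) sub0r oppr_le0.
  exact: D0 u0' uL.
have mm : Num.min (G 0) (G u) <= 0 <= Num.max (G 0) (G u).
  by rewrite ge_min le_max Gu G0 orbT.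
have [x xin Gx] := IVT (ltW u0) (continuous_subspaceT Gc) mm.
move: xin; rewrite in_itv /= => /andP [x0 xu].
exists x; split => //; split; first lra.
move: Gx; rewrite /G cid // /g => /eqP; rewrite subr_eq0 => /eqP ->.
done.
Qed.

End P.

Theorem proposition4 (R : realType) (Sstar : set R)
  (Sstar_open : open Sstar)
  (Sstar_pos : Sstar `<=` [set x | 0 < x])
  (Sstar_add : forall a b, Sstar a -> Sstar b -> Sstar (a + b))
  (Sstar_ne : Sstar !=set0) :
  let L := sup (Sset Sstar) in
  (forall s, Sset Sstar s ->
     exists x, 0 <= x /\ x <= L - s /\ h_S Sstar x = h_S Sstar (x + s)) /\
  (forall x s, 0 <= s -> 0 <= x -> x + s <= L ->
     h_S Sstar x = h_S Sstar (x + s) -> Sset Sstar s).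
Proof.
move=> L; rewrite /L; split.
  by move=> s Ss; apply: parta.
by move=> x s s0 x0 xsL he; eapply partb; eauto.
Qed.
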